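(* Let $\{a,b\}$ be a $2$-element generating set of a finite abelian group $G$. For every integer $k$ with $0\le k<|G|$, there is a spanning quasi-path $P$ in $\mathrm{Cay}(G;a,b)$ such that $\delta_b(P)=k$.
   Context: The Cayley digraph $\mathrm{Cay}(G;a,b)$ has vertex set $G$ and an arc from $v$ to $v+s$ for all $v\in G$, $s\in\{a,b\}$; such an arc is an $s$-edge, and $\delta_b(P)$ denotes the number of $b$-edges in a subdigraph $P$. A spanning quasi-path in a digraph is a spanning subdigraph such that exactly one connected component is a directed path and all other components are directed cycles. *)

(* Defs.v *)
From mathcomp Require Import all_boot fingroup all_algebra.
Set Implicit Arguments. Unset Strict Implicit. Unset Printing Implicit Defensive.
Import GRing.Theory.
Local Open Scope ring_scope.

(* An arc is encoded as (v, s) : G * bool, with tail v; s = false is the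
   a-edge v -> v + a, s = true is the b-edge v -> v + b.
   A spanning subdigraph is given by its arc set P : {set G * bool}
   (its vertex set is all of G). *)
Section Cayley.
Variable G : finZmodType.
Variables a b : G.

Definition arc_tail (e : G * bool) : G := e.1.
Definition arc_head (e : G * bool) : G := e.1 + (if e.2 then b else a).

Definition uadj (P : {set G * bool}) : rel G :=
  fun x y => [exists e in P,
    ((arc_tail e == x) && (arc_head e == y)) ||
    ((arc_tail e == y) && (arc_head e == x))].

Definition components (P : {set G * bool}) : {set {set G}} :=
  [set [set y | connect (uadj P) x y] | x : G].

Definition is_dpath (P : {set G * bool}) (C : {set G}) : Prop :=
  exists (xs : seq G) (es : seq (G * bool)),
    [/\ uniq xs, C = [set x in xs], uniq es,
        [set e in P | arc_tail e \in C] = [set e in es] &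
        size es = (size xs).-1] /\
        forall i : nat, (i < size es)%N ->
          arc_tail (nth (0, false) es i) = nth 0 xs i /\
          arc_head (nth (0, false) es i) = nth 0 xs i.+1.

Definition is_dcycle (P : {set G * bool}) (C : {set G}) : Prop :=
  exists (xs : seq G) (es : seq (G * bool)),
    [/\ (0 < size xs)%N, uniq xs, C = [set x in xs], uniq es &
        [set e in P | arc_tail e \in C] = [set e in es]] /\
        size es = size xs /\
        forall i : nat, (i < size es)%N ->
          arc_tail (nth (0, false) es i) = nth 0 xs i /\
          arc_head (nth (0, false) es i) = nth 0 xs ((i.+1) %% size xs).

(* spanning quasi-path: exactly one component is a directed path, all other
   components are directed cycles (a component cannot be both, as a path on
   m vertices has m-1 arcs and a cycle has m arcs) *)
Definition spanning_quasi_path (P : {set G * bool}) : Prop :=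
  exists2 C0, C0 \in components P &
    is_dpath P C0 /\
    forall C, C \in components P -> C != C0 -> is_dcycle P C.

Definition delta_b (P : {set G * bool}) : nat := #|[set e in P | e.2]|.

End Cayley.

(* Main.v *)
Require Import Defs.
From mathcomp Require Import all_boot fingroup all_algebra.
Set Implicit Arguments. Unset Strict Implicit. Unset Printing Implicit Defensive.
Import GRing.Theory.

Section Aux.
Variable G : finZmodType.
Local Open Scope ring_scope.

Lemma exS (c : G) (k : nat) : (k < #|G|)%N ->
  exists S : {set G}, exists u : G,
    [/\ #|S| = k, u \notin S & forall x, x \in S -> (x + c \in S) || (x + c == u)].
Proof.
elim: k => [|k IH] Hk.
  by exists set0, 0; rewrite cards0 in_set0; split => // x; rewrite in_set0.
have [S [u [HS Hu Hc]]] := IH (ltnW Hk).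
have [v Hv] : exists v, v \notin u |: S.
  apply/existsP; rewrite -negb_forall; apply/negP => /forallP H.
  have : #|u |: S| = #|G|.
    by apply/eqP; rewrite eqn_leq max_card /=; apply/subset_leq_card/subsetP => y _; exact: H.
  by rewrite cardsU1 Hu HS add1n => E; rewrite E ltnn in Hk.
case Huc: (u + c \in u |: S).
- exists (u |: S), v; split => //; first by rewrite cardsU1 Hu HS.
  move=> x; rewrite in_setU1 => /orP [/eqP->|/Hc]; first by rewrite Huc.
  by rewrite !in_setU1 => /orP [->|->]; rewrite ?orbT.
- exists (u |: S), (u + c); split; [by rewrite cardsU1 Hu HS | by rewrite Huc | ].
  move=> x; rewrite in_setU1 => /orP [/eqP->|/Hc]; first by rewrite eqxx orbT.
  by move=> /orP [h|h]; rewrite in_setU1 h ?orbT.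
Qed.
End Aux.
Section QP.
Variable G : finZmodType.
Variables a b : G.
Local Open Scope ring_scope.
Variable s : G -> bool.
Variable u : G.
Variable F : G -> G.
Hypothesis injF : injective F.
Hypothesis HF : forall v, v != u -> F v = v + (if s v then b else a).

Definition PP : {set G * bool} := [set e : G * bool | (e.1 != u) && (e.2 == s e.1)].

Lemma uadjE x y : uadj a b PP x y = ((x != u) && (F x == y)) || ((y != u) && (F y == x)).
Proof.
rewrite /uadj; apply/existsP/orP.
- case=> [[z bb]]; rewrite inE /arc_tail /arc_head /= => /andP [/andP [zu /eqP ->] H].
  rewrite -HF // in H.
  by case/orP: H => /andP [/eqP <- ->]; [left|right]; rewrite zu.
- case=> /andP [xu /eqP E].
  + exists (x, s x); rewrite inE /arc_tail /arc_head /= xu eqxx /= -HF // E.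
    by rewrite !eqxx.
  + exists (y, s y); rewrite inE /arc_tail /arc_head /= xu eqxx /= -HF // E.
    by rewrite !eqxx orbT.
Qed.

Let R := uadj a b PP.

Lemma symR : symmetric R.
Proof. by move=> x y; rewrite /R !uadjE orbC. Qed.

Lemma iter_conn n y : (forall i, (i < n)%N -> iter i F y != u) -> connect R y (iter n F y).
Proof.
elim: n => [|n IH] H; first exact: connect0.
apply: connect_trans (IH (fun i hi => H i (ltnW hi))) _.
apply: connect1; rewrite /R uadjE iterS eqxx andbT.
by rewrite H.
Qed.

Lemma conn_step x : connect R x (F x).
Proof.
case: (eqVneq x u) => [->|xu]; last by apply: connect1; rewrite /R uadjE xu eqxx.
rewrite (sym_connect_sym symR).
have fc : fconnect F (F u) u by rewrite fconnect_sym //; exact: fconnect1.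
rewrite -{2}(iter_findex fc); apply: iter_conn => i hi; apply/eqP => E.
have ho : (i < fingraph.order F (F u))%N := ltn_trans hi (findex_max fc).
by have := findex_iter ho; rewrite E => Ei; rewrite Ei ltnn in hi.
Qed.

Lemma connectE x y : connect R x y = fconnect F x y.
Proof.
apply/idP/idP.
- apply: connect_sub => {}x {}y; rewrite /R uadjE => /orP [] /andP [_ /eqP <-].
  + exact: fconnect1.
  + by rewrite fconnect_sym //; exact: fconnect1.
- move=> fc; rewrite -(iter_findex fc); elim: (findex F x y) => [|n IH].
  + exact: connect0.
  + by rewrite iterS; apply: connect_trans IH (conn_step _).
Qed.

Lemma nthT (x0 x : G) i n : (i < n)%N -> nth x0 (traject F x n) i = iter i F x.
Proof. by move=> h; rewrite (set_nth_default x) ?size_traject // nth_traject. Qed.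

Definition gg (y : G) := (y, s y).

Lemma setE_gen (C : {set G}) (t : seq G) :
  (forall y, (y \in C) && (y != u) = (y \in t)) ->
  [set e in PP | arc_tail e \in C] = [set e in map gg t].
Proof.
move=> H; apply/setP => [[y bb]]; rewrite !inE /arc_tail /=.
apply/idP/mapP.
- case/andP=> /andP [yu /eqP ->] yC; exists y => //; by rewrite -H yC yu.
- case=> z zt [-> ->]; rewrite eqxx andbT.
  by move: zt; rewrite -H => /andP [-> ->].
Qed.

Lemma gg_inj : injective gg.
Proof. by move=> x y []. Qed.

Lemma headE y : y != u -> arc_head a b (gg y) = F y.
Proof. by move=> yu; rewrite HF. Qed.

Lemma fconn_eq x y : fconnect F x y -> [set z | fconnect F x z] = [set z | fconnect F y z].
Proof.
move=> fc; apply/setP => z; rewrite !inE; apply/idP/idP => H.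
- by apply: connect_trans H; rewrite fconnect_sym.
- exact: connect_trans fc H.
Qed.

Lemma main_qp : spanning_quasi_path a b PP.
Proof.
have compE : forall x, [set y | connect R x y] = [set y | fconnect F x y].
  by move=> x; apply/setP => y; rewrite !inE connectE.
exists [set y | connect R u y]; first by apply/imsetP; exists u.
split.
- set w := F u; set o := fingraph.order F w.
  have o0 : (0 < o)%N by exact: fingraph.order_gt0.
  have last : iter o.-1 F w = u.
    apply: injF; rewrite -iterS prednK // iter_order //.
  have xsE : orbit F w = rcons (traject F w o.-1) u.
    by rewrite /orbit -/o -{1}(prednK o0) trajectSr last.
  have uq := orbit_uniq F w; rewrite xsE rcons_uniq in uq.
  case/andP: uq => unt uqt.
  have Cw : [set y | connect R u y] = [set y in orbit F w].
    rewrite compE (fconn_eq (fconnect1 F u)); apply/setP => y.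
    by rewrite !inE fconnect_orbit.
  exists (orbit F w), (map gg (traject F w o.-1)); split; first split.
  + exact: orbit_uniq.
  + exact: Cw.
  + by rewrite map_inj_uniq //; exact: gg_inj.
  + apply: setE_gen => y; rewrite Cw inE xsE mem_rcons in_cons.
    by case: (eqVneq y u) => [->|]; rewrite ?(negPf unt) ?andbF ?andbT.
  + by rewrite size_map xsE size_rcons size_traject.
  + move=> i; rewrite size_map size_traject => hi.
    have hi' : (i.+1 < o)%N by rewrite -(prednK o0) ltnS.
    have ni : iter i F w != u.
      by apply: contraNneq unt => <-; apply/trajectP; exists i.
    rewrite (nth_map 0); last by rewrite size_traject.
    rewrite /orbit -/o (nthT _ _ hi) (nthT _ _ hi') (nthT _ _ (ltnW hi')).
    rewrite /arc_tail headE // iterS.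
- move=> C /imsetP [x _ ->] CC0.
  have xu : ~~ fconnect F x u.
    apply: contra CC0 => fc; rewrite !compE (fconn_eq fc).
    by [].
  set o := fingraph.order F x.
  have o0 : (0 < o)%N by exact: fingraph.order_gt0.
  have Cx : [set y | connect R x y] = [set y in orbit F x].
    by rewrite compE; apply/setP => y; rewrite !inE fconnect_orbit.
  exists (orbit F x), (map gg (orbit F x)); split; first split.
  + by rewrite size_orbit.
  + exact: orbit_uniq.
  + exact: Cx.
  + by rewrite map_inj_uniq ?orbit_uniq //; exact: gg_inj.
  + apply: setE_gen => y; rewrite Cx inE.
    case: (eqVneq y u) => [->|]; rewrite ?andbF ?andbT //.
    by rewrite -fconnect_orbit (negPf xu).
  + split; first by rewrite size_map.
    move=> i; rewrite size_map size_orbit => hi.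
    have ni : iter i F x != u.
      by apply: contraNneq xu => <-; exact: fconnect_iter.
    rewrite (nth_map 0); last by rewrite size_orbit.
    rewrite /orbit -/o (nthT _ _ hi) (nthT _ _ (ltn_pmod _ o0)).
    rewrite /arc_tail headE //; split => //.
    case: (ltngtP i.+1 o) => [h||h]; first by rewrite modn_small.
    * by rewrite ltnNge hi.
    * by rewrite h modnn /= -iterS h iter_order.
Qed.
End QP.

Theorem mainTheorem19 (G : finZmodType) (a b : G) :
  a != b ->
  (<<[set a; b]>>)%g = [set: G] ->
  forall k : nat, k < #|G| ->
  exists P : {set G * bool},
    spanning_quasi_path a b P /\ delta_b P = k.
Proof.
move=> _ _ k Hk.
have [S [u [HS Hu Hc]]] := exS (b - a)%R Hk.
pose g (v : G) := (v + (if v \in S then b else a))%R.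
have ginj : {in [set~ u] &, injective g}.
  have key : forall x y, x \in S -> y \notin S -> y != u -> g x <> g y.
    move=> x y xS yS yu; rewrite /g (negPf yS) xS => E.
    have Ey : y = (x + (b - a))%R by rewrite addrA E addrK.
    by move: (Hc x xS); rewrite -Ey (negPf yS) (negPf yu).
  move=> x y; rewrite !inE => xu yu.
  case xS: (x \in S); case yS: (y \in S) => E.
  - by move: E; rewrite /g xS yS => /addIr.
  - by case: (key x y) => //; rewrite yS.
  - by case: (key y x) => //; rewrite xS.
  - by move: E; rewrite /g xS yS => /addIr.
have [w Hw] : exists w, w \notin g @: [set~ u].
  apply/existsP; rewrite -negb_forall; apply/negP => /forallP H.
  have : #|g @: [set~ u]| = #|G|.
    by apply/eqP; rewrite eqn_leq max_card /=; apply/subset_leq_card/subsetP => y _; exact: H.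
  rewrite card_in_imset // cardsC1 => E.
  have G0 : (0 < #|G|)%N by apply/card_gt0P; exists u.
  by move: E; rewrite -(prednK G0) => /eqP; rewrite -[X in _ == X]addn1 -{1}(addn0 #|G|.-1) eqn_add2l.
pose F (v : G) := if v == u then w else g v.
have Finj : injective F.
  move=> x y; rewrite /F.
  case: (eqVneq x u) => [->|xu]; case: (eqVneq y u) => [->|yu] //.
  - by move=> E; move: Hw; rewrite E; move/negP; case; apply: imset_f; rewrite !inE.
  - by move=> E; move: Hw; rewrite -E; move/negP; case; apply: imset_f; rewrite !inE.
  - by apply: ginj; rewrite !inE.
have HF : forall v, v != u -> F v = (v + (if v \in S then b else a))%R.
  by move=> v vu; rewrite /F (negPf vu).
exists (PP (fun v => v \in S) u); split; first exact: (main_qp Finj HF).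
rewrite /delta_b -HS -(card_imset S (fun x y (E : (x, true) = (y, true)) => congr1 fst E)).
apply: eq_card => -[y bb]; rewrite !inE /=.
apply/idP/imsetP.
- case/andP => /andP [yu /eqP ->] yS; exists y => //; by rewrite yS.
- case=> z zS [-> ->]; rewrite zS eqxx andbT /=.
  by rewrite andbT; apply: contraNneq Hu => <-.
Qed.
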